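(* Let $c_0=7/(2\sqrt3)$ and $c_1=2\sqrt2$, and let $\alpha(c)$ be the linear function of $c$ with $\alpha(c_0)=\sqrt3/4$ and $\alpha(c_1)=1/\sqrt2$. Then, for $c>0$, $$ s(c)\ge\begin{cases}\frac{9c^2}{28}, & c\le c_0,\\[2pt] -c^2+7\alpha c+\frac{c}{\alpha}-11\alpha^2-2-\frac{1}{4\alpha^2}, & c_0\le c\le c_1,\end{cases}$$ where $\alpha=\alpha(c)$.
   Context: $[n]=\{1,\dots,n\}$; for $A\subset\mathbb Z$, $A+A=\{a+b:a,b\in A\}$. Let $s(k,n)=\max\{|A+A|: A\subseteq[n],\ |A|=k\}$ and, for real $c>0$, $s(c)=\liminf_{n\to\infty} s(\lfloor cn^{1/2}\rfloor,n)/n$. *)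

(* Defs.v *)
From Stdlib Require Import Reals ZArith.
From Coquelicot Require Import Coquelicot.
From mathcomp Require Import all_boot.

Set Implicit Arguments.
Unset Strict Implicit.
Unset Printing Implicit Defensive.

(* A subset of [n] = {1..n} is represented as A : {set 'I_n.+1} with 0 \notin A. *)
Definition sumset_card (n : nat) (A : {set 'I_n.+1}) : nat :=
  #|[set m : 'I_(2 * n).+1 |
      [exists a in A, exists b in A, (nat_of_ord m == nat_of_ord a + nat_of_ord b)%N]]|.

(* s(k,n) = max { |A+A| : A ⊆ [n], |A| = k }  (0 if no such A, i.e. k > n) *)
Definition s_kn (k n : nat) : nat :=
  (\max_(A : {set 'I_n.+1} | (ord0 \notin A) && (#|A| == k)) sumset_card A)%N.

Open Scope R_scope.

Definition s_c (c : R) : Rbar :=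
  LimInf_seq (fun n : nat =>
    INR (s_kn (Z.to_nat (Int_part (c * sqrt (INR n)))) n) / INR n).

Definition c_0 : R := 7 / (2 * sqrt 3).
Definition c_1 : R := 2 * sqrt 2.

Definition alpha (c : R) : R :=
  sqrt 3 / 4 + (c - c_0) * (1 / sqrt 2 - sqrt 3 / 4) / (c_1 - c_0).

Definition bound_mid (c : R) : R :=
  let a := alpha c in
  - c ^ 2 + 7 * a * c + c / a - 11 * a ^ 2 - 2 - 1 / (4 * a ^ 2).

(* Main.v *)
Require Import Defs.
From Stdlib Require Import Reals Lra Lia Psatz ZArith.
From Coquelicot Require Import Coquelicot.

Module RL.
Local Open Scope R_scope.


Lemma Rmax0_abs x : Rmax 0 x = (x + Rabs x) / 2.
Proof. unfold Rmax, Rabs; destruct (Rle_dec 0 x), (Rcase_abs x); lra. Qed.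

Lemma Rmin_abs x y : Rmin x y = (x + y - Rabs (x - y)) / 2.
Proof. unfold Rmin, Rabs; destruct (Rle_dec x y), (Rcase_abs (x - y)); lra. Qed.

Lemma lim_max0 (u : nat -> R) (l : R) : is_lim_seq u l -> is_lim_seq (fun n => Rmax 0 (u n)) (Rmax 0 l).
Proof.
intro H. rewrite Rmax0_abs.
apply is_lim_seq_ext with (fun n => (u n + Rabs (u n)) / 2).
{ intro n. now rewrite Rmax0_abs. }
apply is_lim_seq_div'; [| apply is_lim_seq_const | lra].
apply is_lim_seq_plus'; auto. apply (is_lim_seq_abs u l H).
Qed.

Lemma lim_min (u v : nat -> R) (lu lv : R) : is_lim_seq u lu -> is_lim_seq v lv ->
  is_lim_seq (fun n => Rmin (u n) (v n)) (Rmin lu lv).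
Proof.
intros Hu Hv. rewrite Rmin_abs.
apply is_lim_seq_ext with (fun n => (u n + v n - Rabs (u n - v n)) / 2).
{ intro n. now rewrite Rmin_abs. }
apply is_lim_seq_div'; [| apply is_lim_seq_const | lra].
apply is_lim_seq_minus'. apply is_lim_seq_plus'; auto.
apply (is_lim_seq_abs (fun n => u n - v n) (lu - lv)).
apply is_lim_seq_minus'; auto.
Qed.

Lemma lim_sqrt_inf : is_lim_seq (fun n => sqrt (INR n)) p_infty.
Proof.
apply is_lim_seq_spec. intro M.
exists (Z.to_nat (up (M * M))). intros n Hn.
assert (H1 : M * M < INR n).
{ apply le_INR in Hn. rewrite INR_IZR_INZ in Hn.
  destruct (archimed (M * M)) as [H2 _].
  assert (0 <= M * M) by nra.
  assert (H3 : (0 <= up (M * M))%Z) by (apply le_IZR; simpl; lra).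
  rewrite Z2Nat.id in Hn by exact H3. lra. }
assert (0 <= M * M) by nra.
destruct (Rle_dec M 0). { assert (0 < sqrt (INR n)) by (apply sqrt_lt_R0; lra). lra. }
rewrite <- (sqrt_square M) by lra.
apply sqrt_lt_1_alt; lra.
Qed.

Lemma lim_isqrt : is_lim_seq (fun n => / sqrt (INR n)) 0.
Proof.
apply (is_lim_seq_inv _ p_infty lim_sqrt_inf). discriminate.
Qed.

Lemma lim_inv_n : is_lim_seq (fun n => / INR n) 0.
Proof.
apply (is_lim_seq_inv _ p_infty is_lim_seq_INR). discriminate.
Qed.

Lemma INR_floor x : 0 <= x -> x - 1 < INR (Z.to_nat (Int_part x)) <= x.
Proof.
intro Hx. destruct (base_Int_part x) as [H1 H2].
assert (0 <= Int_part x)%Z.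
{ unfold Int_part. destruct (archimed x) as [H3 _].
  assert (H4 : (0 < up x)%Z) by (apply lt_IZR; simpl; lra). lia. }
rewrite INR_IZR_INZ, Z2Nat.id by lia. lra.
Qed.

Lemma lim_fl_sqrt x : 0 <= x ->
  is_lim_seq (fun n => INR (Z.to_nat (Int_part (x * sqrt (INR n)))) / sqrt (INR n)) x.
Proof.
intro Hx.
apply is_lim_seq_le_le_loc with (fun n => x - / sqrt (INR n)) (fun _ => x).
- exists 1%nat. intros n Hn.
  assert (Hs : 0 < sqrt (INR n)).
  { apply sqrt_lt_R0. apply lt_0_INR. lia. }
  assert (0 <= x * sqrt (INR n)) by nra.
  destruct (INR_floor _ H) as [H1 H2].
  split.
  + apply Rmult_le_reg_r with (sqrt (INR n)); auto.
    unfold Rdiv. rewrite Rmult_assoc, Rinv_l, Rmult_1_r by lra.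
    rewrite Rmult_minus_distr_r, Rinv_l by lra. lra.
  + apply Rmult_le_reg_r with (sqrt (INR n)); auto.
    unfold Rdiv. rewrite Rmult_assoc, Rinv_l, Rmult_1_r by lra. lra.
- replace (Finite x) with (Finite (x - 0)) by (f_equal; ring).
  apply is_lim_seq_minus'. apply is_lim_seq_const. apply lim_isqrt.
- apply is_lim_seq_const.
Qed.

Lemma lim_fl_lin x : 0 <= x ->
  is_lim_seq (fun n => INR (Z.to_nat (Int_part (x * INR n)) + 1) / INR n) x.
Proof.
intro Hx.
apply is_lim_seq_le_le_loc with (fun _ => x) (fun n => x + / INR n).
- exists 1%nat. intros n Hn.
  assert (Hs : 0 < INR n) by (apply lt_0_INR; lia).
  assert (0 <= x * INR n) by nra.
  destruct (INR_floor _ H) as [H1 H2].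
  rewrite plus_INR. simpl INR.
  split.
  + apply Rmult_le_reg_r with (INR n); auto.
    unfold Rdiv. rewrite Rmult_assoc, Rinv_l, Rmult_1_r by lra. lra.
  + apply Rmult_le_reg_r with (INR n); auto.
    unfold Rdiv. rewrite Rmult_assoc, Rinv_l, Rmult_1_r by lra.
    rewrite Rmult_plus_distr_r, Rinv_l by lra. lra.
- apply is_lim_seq_const.
- replace (Finite x) with (Finite (x + 0)) by (f_equal; ring).
  apply is_lim_seq_plus'. apply is_lim_seq_const. apply lim_inv_n.
Qed.

End RL.
Import RL.

Module Disc.
From mathcomp Require Import all_boot zify.
Set Implicit Arguments.
Unset Strict Implicit.
Unset Printing Implicit Defensive.
Local Open Scope nat_scope.


Definition inA (n m o b x : nat) : bool :=
  [|| (0 < x <= m.+1),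
      [exists i : 'I_m, x == o + m.+1 * i],
      [exists j : 'I_b, x == o + m * m.+1 + m * j] |
      (n - m <= x)].

Definition Aset n m o b : {set 'I_n.+1} := [set x : 'I_n.+1 | inA n m o b x].

Lemma card_bounded N K (S : {set 'I_N}) : (forall i, i \in S -> i < K) -> #|S| <= K.
Proof.
case: K => [|K] HS.
  rewrite leqn0 cards_eq0; apply/eqP/setP => i; rewrite inE.
  by apply/negP => /HS.
have inj : {in S &, injective (fun i : 'I_N => (inord (nat_of_ord i) : 'I_K.+1))}.
  move=> i j Hi Hj /(congr1 (@nat_of_ord _)); rewrite !inordK ?HS //.
  by move/val_inj.
rewrite -(card_in_imset inj).
by apply: leq_trans (max_card _) _; rewrite card_ord.
Qed.

Lemma card_Aset n m o b : #|Aset n m o b| <= 3 * m + 2 + b.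
Proof.
set H1 := [set x : 'I_n.+1 | 0 < x <= m.+1].
set D := [set x : 'I_n.+1 | [exists i : 'I_m, nat_of_ord x == o + m.+1 * i]].
set V := [set x : 'I_n.+1 | [exists j : 'I_b, nat_of_ord x == o + m * m.+1 + m * j]].
set H2 := [set x : 'I_n.+1 | n - m <= x].
have -> : Aset n m o b = H1 :|: D :|: V :|: H2.
  by apply/setP => x; rewrite !inE /inA !orbA.
have cU : forall (A B : {set 'I_n.+1}), #|A :|: B| <= #|A| + #|B|.
  by move=> A B; rewrite cardsU leq_subr.
have c1 : #|H1| <= m.+1.
  have sub : H1 \subset [set (inord (nat_of_ord i).+1 : 'I_n.+1) | i : 'I_m.+1 in [set: 'I_m.+1]].
    apply/subsetP => x; rewrite inE => /andP [x0 xm].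
    apply/imsetP; exists (inord (nat_of_ord x).-1); first by [].
    rewrite inordK; last by lia.
    by rewrite prednK // inord_val.
  apply: leq_trans (subset_leq_card sub) _.
  by apply: leq_trans (leq_imset_card _ _) _; rewrite cardsT card_ord.
have c2 : #|D| <= m.
  have sub : D \subset [set (inord (o + m.+1 * i) : 'I_n.+1) | i : 'I_m in [set: 'I_m]].
    apply/subsetP => x; rewrite inE => /existsP [i /eqP Hi].
    apply/imsetP; exists i; first by [].
    by rewrite -Hi inord_val.
  apply: leq_trans (subset_leq_card sub) _.
  by apply: leq_trans (leq_imset_card _ _) _; rewrite cardsT card_ord.
have c3 : #|V| <= b.
  have sub : V \subset [set (inord (o + m * m.+1 + m * j) : 'I_n.+1) | j : 'I_b in [set: 'I_b]].
    apply/subsetP => x; rewrite inE => /existsP [j /eqP Hj].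
    apply/imsetP; exists j; first by [].
    by rewrite -Hj inord_val.
  apply: leq_trans (subset_leq_card sub) _.
  by apply: leq_trans (leq_imset_card _ _) _; rewrite cardsT card_ord.
have c4 : #|H2| <= m.+1.
  have sub : H2 \subset [set (inord (n - m + i) : 'I_n.+1) | i : 'I_m.+1 in [set: 'I_m.+1]].
    apply/subsetP => x; rewrite inE => Hx.
    have xn := ltn_ord x.
    apply/imsetP; exists (inord (nat_of_ord x - (n - m))); first by [].
    rewrite inordK; last by lia.
    by rewrite subnKC // inord_val.
  apply: leq_trans (subset_leq_card sub) _.
  by apply: leq_trans (leq_imset_card _ _) _; rewrite cardsT card_ord.
have := cU (H1 :|: D :|: V) H2; have := cU (H1 :|: D) V; have := cU H1 D.
move=> h1 h2 h3.
apply: (leq_trans h3); apply: (leq_trans (leq_add h2 c4)).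
apply: (leq_trans (leq_add (leq_add h1 c3) (leqnn _))).
have hh := leq_add c1 c2.
apply: (leq_trans (leq_add (leq_add hh (leqnn b)) (leqnn m.+1))); lia.
Qed.

Lemma ord0_notin_A n m o b : 0 < o -> m < n -> (ord0 : 'I_n.+1) \notin Aset n m o b.
Proof.
move=> o0 mn; rewrite inE /inA; apply/negP.
move=> /orP [H|/orP [/existsP [i /eqP H]|/orP [/existsP [j /eqP H]|H]]]; simpl in H; lia.
Qed.


Lemma repL n m o b s : 0 < m -> o + m * m.+1 + m * b <= n ->
  o < s <= o + m * m.+1 + m * b ->
  exists x y, [/\ x <= n, y <= n, inA n m o b x, inA n m o b y & s = x + y].
Proof.
move=> m0 Hn /andP [H1 H2].
case: (leqP s (o + m * m.+1)) => Hs.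
- set r := s - o - 1.
  have Hr : r < m * m.+1 by rewrite /r; lia.
  have Hi : r %/ m.+1 < m by rewrite ltn_divLR.
  have Hh : r %% m.+1 < m.+1 by rewrite ltn_mod.
  have E := divn_eq r m.+1.
  exists (o + m.+1 * (r %/ m.+1)), (r %% m.+1).+1; split.
  + have : m.+1 * (r %/ m.+1) <= m.+1 * m by rewrite leq_mul2l ltnW.
    nia.
  + nia.
  + rewrite /inA; apply/orP; right; apply/orP; left.
    by apply/existsP; exists (Ordinal Hi).
  + by rewrite /inA; apply/orP; left; rewrite ltnS Hh.
  + rewrite /r in E; nia.
- set r := s - (o + m * m.+1) - 1.
  have Hr : r < m * b by rewrite /r; lia.
  have Hj : r %/ m < b by rewrite ltn_divLR // mulnC.
  have Hh : r %% m < m by rewrite ltn_mod.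
  have E := divn_eq r m.
  exists (o + m * m.+1 + m * (r %/ m)), (r %% m).+1; split.
  + have : m * (r %/ m) <= m * b by rewrite leq_mul2l ltnW ?orbT.
    nia.
  + nia.
  + rewrite /inA; apply/orP; right; apply/orP; right; apply/orP; left.
    by apply/existsP; exists (Ordinal Hj).
  + by rewrite /inA; apply/orP; left; rewrite ltnS /= ltnW.
  + rewrite /r in E; nia.
Qed.

Lemma repR n m o b s : 0 < m -> m < n -> o + m * m.+1 + m * b <= n ->
  n - m + o <= s < n - m + (o + m * m.+1) + m * b ->
  exists x y, [/\ x <= n, y <= n, inA n m o b x, inA n m o b y & s = x + y].
Proof.
move=> m0 mn Hn /andP [H1 H2].
case: (ltnP s (n - m + (o + m * m.+1))) => Hs.
- set r := s - (n - m + o).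
  have Hr : r < m * m.+1 by rewrite /r; lia.
  have Hi : r %/ m.+1 < m by rewrite ltn_divLR.
  have Hh : r %% m.+1 < m.+1 by rewrite ltn_mod.
  have E := divn_eq r m.+1.
  exists (o + m.+1 * (r %/ m.+1)), (n - m + r %% m.+1); split.
  + have : m.+1 * (r %/ m.+1) <= m.+1 * m by rewrite leq_mul2l ltnW.
    nia.
  + lia.
  + rewrite /inA; apply/orP; right; apply/orP; left.
    by apply/existsP; exists (Ordinal Hi).
  + by rewrite /inA; apply/orP; right; apply/orP; right; apply/orP; right; rewrite leq_addr.
  + rewrite /r in E; nia.
- set r := s - (n - m + (o + m * m.+1)).
  have Hr : r < m * b by rewrite /r; lia.
  have Hj : r %/ m < b by rewrite ltn_divLR // mulnC.
  have Hh : r %% m < m by rewrite ltn_mod.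
  have E := divn_eq r m.
  exists (o + m * m.+1 + m * (r %/ m)), (n - m + r %% m); split.
  + have : m * (r %/ m) <= m * b by rewrite leq_mul2l ltnW ?orbT.
    nia.
  + lia.
  + rewrite /inA; apply/orP; right; apply/orP; right; apply/orP; left.
    by apply/existsP; exists (Ordinal Hj).
  + by rewrite /inA; apply/orP; right; apply/orP; right; apply/orP; right; rewrite leq_addr.
  + rewrite /r in E; nia.
Qed.


Lemma card_int_ge N lo hi : hi <= N.+1 ->
  hi - lo <= #|[set s : 'I_N.+1 | lo <= s < hi]|.
Proof.
move=> HN.
have inj : injective (fun i : 'I_(hi - lo) => (inord (lo + i) : 'I_N.+1)).
  move=> i j /(congr1 (@nat_of_ord _)).
  rewrite !inordK; [move=> H; apply: val_inj => /=; lia| |];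
  have := ltn_ord i; have := ltn_ord j; lia.
rewrite -[X in X <= _](card_ord (hi - lo)) -cardsT -(card_imset _ inj).
apply: subset_leq_card; apply/subsetP => x /imsetP [i _ ->].
rewrite inE inordK; have := ltn_ord i; lia.
Qed.

Lemma card_int_le N lo hi :
  #|[set s : 'I_N.+1 | lo <= s < hi]| <= hi - lo.
Proof.
set S := [set s : 'I_N.+1 | lo <= s < hi].
have inj : {in S &, injective (fun s : 'I_N.+1 => (inord (s - lo) : 'I_N.+1))}.
  move=> i j; rewrite !inE => /andP [Hi1 Hi2] /andP [Hj1 Hj2] /(congr1 (@nat_of_ord _)).
  rewrite !inordK; [move=> H; apply: val_inj => /=; lia| |];
  have := ltn_ord i; have := ltn_ord j; lia.
rewrite -(card_in_imset inj); apply: card_bounded => x /imsetP [i].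
rewrite inE => /andP [H1 H2] ->; rewrite inordK; have := ltn_ord i; lia.
Qed.

Lemma card_tri m b t : 2 * #|[set p : 'I_m * 'I_b | p.1 + p.2 < t]| <= t * t.+1.
Proof.
elim: t => [|t IH].
  have -> : [set p : 'I_m * 'I_b | p.1 + p.2 < 0] = set0.
    by apply/setP => p; rewrite !inE ltn0.
  by rewrite cards0.
set Q := [set p : 'I_m * 'I_b | p.1 + p.2 == t].
have sub : [set p : 'I_m * 'I_b | p.1 + p.2 < t.+1] \subset
           [set p : 'I_m * 'I_b | p.1 + p.2 < t] :|: Q.
  apply/subsetP => p; rewrite !inE ltnS leq_eqVlt; case/orP => ->; by rewrite ?orbT.
have cQ : #|Q| <= t.+1.
  have inj : {in Q &, injective (fun p : 'I_m * 'I_b => p.1)}.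
    move=> [i j] [i' j']; rewrite !inE /= => /eqP H /eqP H' E.
    subst i'; congr pair; apply: val_inj => /=; lia.
  rewrite -(card_in_imset inj); apply: card_bounded => x /imsetP [p].
  rewrite inE => /eqP H ->; lia.
have := subset_leq_card sub; rewrite cardsU => H.
have H2 : #|[set p : 'I_m * 'I_b | p.1 + p.2 < t.+1]| <=
   #|[set p : 'I_m * 'I_b | p.1 + p.2 < t]| + #|Q|.
  by apply: (leq_trans H); apply: leq_subr.
move: IH H2 cQ; set X := #|_|; set Y := #|_|; set Z := #|Q|. nia.
Qed.

Lemma card_tri_rev m b t :
  #|[set p : 'I_m * 'I_b | m + b < p.1 + p.2 + t + 2]| <=
  #|[set p : 'I_m * 'I_b | p.1 + p.2 < t]|.
Proof.
set r := fun p : 'I_m * 'I_b => (rev_ord p.1, rev_ord p.2).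
have inj : injective r.
  move=> [i j] [i' j'] /= [] H1 H2.
  have := ltn_ord i; have := ltn_ord j; have := ltn_ord i'; have := ltn_ord j'.
  move=> *; congr pair; apply: val_inj => /=; lia.
rewrite -(card_imset _ inj); apply: subset_leq_card; apply/subsetP => x /imsetP [[i j]].
rewrite !inE /r /= => H ->; rewrite /=.
have := ltn_ord i; have := ltn_ord j; lia.
Qed.


Definition SSet n (A : {set 'I_n.+1}) : {set 'I_(2 * n).+1} :=
  [set m : 'I_(2 * n).+1 |
      [exists a in A, exists b in A, (nat_of_ord m == nat_of_ord a + nat_of_ord b)]].

Lemma sumset_cardE n (A : {set 'I_n.+1}) : sumset_card A = #|SSet A|.
Proof. by []. Qed.

Lemma inSS n m o b (s : 'I_(2 * n).+1) x y : x <= n -> y <= n ->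
  inA n m o b x -> inA n m o b y -> nat_of_ord s = x + y -> s \in SSet (Aset n m o b).
Proof.
move=> xn yn Ax Ay E; rewrite inE; apply/existsP; exists (inord x); apply/andP; split.
  by rewrite inE inordK ?ltnS.
apply/existsP; exists (inord y); apply/andP; split.
  by rewrite inE inordK ?ltnS.
by rewrite !inordK ?ltnS // E.
Qed.

Lemma main_disc n m o b :
  0 < m -> 0 < o -> m < n -> o + m * m.+1 + m * b <= n ->
  2 * (2 * (m * m.+1 + m * b) + m * b) <=
  2 * sumset_card (Aset n m o b)
  + ((m * b - o) %/ m + 1) * ((m * b - o) %/ m + 1).+1
  + (m + b - (n - (o + m * m.+1)) %/ m) * (m + b - (n - (o + m * m.+1)) %/ m).+1
  + 2 * ((o + m * m.+1 + m * b).+1 - (n - m + o)).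
Proof.
move=> m0 o0 mn Hn.
set v := o + m * m.+1.
set t1 := (m * b - o) %/ m + 1.
set q := (n - v) %/ m.
set t2 := m + b - q.
set ovl := (v + m * b).+1 - (n - m + o).
rewrite sumset_cardE.
set SS := SSet (Aset n m o b).
set L := [set s : 'I_(2 * n).+1 | o.+1 <= s < (v + m * b).+1].
set R := [set s : 'I_(2 * n).+1 | n - m + o <= s < n - m + v + m * b].
set phi := fun p : 'I_m * 'I_b => (inord (o + m.+1 * p.1 + (v + m * p.2)) : 'I_(2 * n).+1).
set C := [set phi p | p in [set: 'I_m * 'I_b]].
set P1 := [set p : 'I_m * 'I_b | p.1 + p.2 < t1].
set P2 := [set p : 'I_m * 'I_b | m + b < p.1 + p.2 + t2 + 2].
have phiv : forall i j, i < m -> j < b -> o + m.+1 * i + (v + m * j) < (2 * n).+1.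
  move=> i j Hi Hj.
  have h1 : m.+1 * i <= m * m.+1 by rewrite mulnC leq_mul2r ltnW.
  have h2 : m * j <= m * b by rewrite leq_mul2l ltnW ?orbT.
  rewrite /v in Hn *; lia.
have phiE : forall p : 'I_m * 'I_b, nat_of_ord (phi p) = o + m.+1 * p.1 + (v + m * p.2).
  by move=> [i j]; rewrite /phi inordK //= phiv.
have subS : L :|: R :|: C \subset SS.
  apply/subsetP => s; rewrite !inE => /orP [/orP [HL|HR]|HC].
  - rewrite ltnS in HL.
    have [x [y [xn yn Ax Ay E]]] := repL m0 Hn HL.
    by have := inSS xn yn Ax Ay E; rewrite inE.
  - have [x [y [xn yn Ax Ay E]]] := repR m0 mn Hn HR.
    by have := inSS xn yn Ax Ay E; rewrite inE.
  - case/imsetP: HC => [[i j]] _ ->.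
    suff : phi (i, j) \in SS by rewrite inE.
    apply: (@inSS n m o b _ (o + m.+1 * i) (v + m * j)).
    + have h1 : m.+1 * i <= m * m.+1 by rewrite mulnC leq_mul2r ltnW.
      rewrite /v in Hn *; lia.
    + have h2 : m * j <= m * b by rewrite leq_mul2l ltnW ?orbT.
      rewrite /v in Hn *; lia.
    + rewrite /inA; apply/orP; right; apply/orP; left.
      by apply/existsP; exists i.
    + rewrite /inA; apply/orP; right; apply/orP; right; apply/orP; left.
      by apply/existsP; exists j.
    + by rewrite phiE.
have cL : m * m.+1 + m * b <= #|L|.
  have H := @card_int_ge (2 * n) o.+1 (v + m * b).+1.
  apply: leq_trans (H _); rewrite /v in Hn *; lia.
have cR : m * m.+1 + m * b <= #|R|.
  have H := @card_int_ge (2 * n) (n - m + o) (n - m + v + m * b).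
  apply: leq_trans (H _); rewrite /v in Hn *; lia.
have cLR : #|L :&: R| <= ovl.
  apply: leq_trans (card_int_le (2 * n) (n - m + o) (v + m * b).+1).
  apply: subset_leq_card; apply/subsetP => s; rewrite !inE.
  by case/andP => /andP [_ ->] /andP [-> _].
have cC : #|C| = m * b.
  rewrite card_imset ?cardsT ?card_prod ?card_ord //.
  move=> [i j] [i' j'] E.
  have := phiE (i, j); have := phiE (i', j'); rewrite E => E1 E2.
  rewrite E2 /= in E1.
  have Hi := ltn_ord i; have Hi' := ltn_ord i'.
  have E3 : ((i + j) * m + i) %% m = ((i' + j') * m + i') %% m.
    congr (_ %% m); lia.
  rewrite !modnMDl !modn_small // in E3.
  have E4 : i = i' :> nat by [].
  congr pair; apply: val_inj => //=.
  rewrite E4 in E1.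
  have : m * j = m * j' by lia.
  move/eqP; rewrite eqn_mul2l => /orP [/eqP m0'|/eqP //]; lia.
have cI : (L :|: R) :&: C \subset phi @: P1 :|: phi @: P2.
  apply/subsetP => s; rewrite !inE => /andP [HLR /imsetP [[i j] _ Es]].
  have Hi := ltn_ord i; have Hj := ltn_ord j.
  have Hs := phiE (i, j); rewrite -Es /= in Hs.
  case/orP: HLR => [HL|HR].
  - apply/orP; left; apply/imsetP; exists (i, j) => //.
    rewrite inE /= /t1.
    case/andP: HL => _; rewrite Hs ltnS => HL.
    have H : (i + j) * m <= m * b - o by lia.
    rewrite -leq_divRL // in H; lia.
  - apply/orP; right; apply/imsetP; exists (i, j) => //.
    rewrite inE /= /t2.
    case/andP: HR; rewrite Hs => HR _.
    have Hq1 : q * m <= n - v by rewrite /q leq_trunc_div.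
    have H : q * m < (i + j + 2) * m by lia.
    rewrite ltn_pmul2r // in H; lia.
have cP1 := card_tri m b t1.
have cP2 := card_tri m b t2.
have cP2' := card_tri_rev m b t2.
have cI1 : #|(L :|: R) :&: C| <= #|P1| + #|P2|.
  apply: leq_trans (subset_leq_card cI) _.
  rewrite cardsU; apply: leq_trans (leq_subr _ _) _.
  by apply: leq_add; apply: leq_imset_card.
have E1 := cardsUI L R.
have E2 := cardsUI (L :|: R) C.
have cS := subset_leq_card subS.
move: cP1 cP2 cP2' cI1 E1 E2 cS cL cR cLR cC.
rewrite -/P1 -/P2.
set a1 := #|P1|; set a2 := #|P2|; set a3 := #|[set p : 'I_m * 'I_b | p.1 + p.2 < t2]|.
set z1 := #|L :&: R|; set z2 := #|(L :|: R) :&: C|; set z3 := #|L :|: R|.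
set z4 := #|L :|: R :|: C|; set z5 := #|SS|; set l := #|L|; set r := #|R|; set c := #|C|.
lia.
Qed.


Lemma extend_set n (A : {set 'I_n.+1}) d : (ord0 : 'I_n.+1) \notin A -> #|A| + d <= n ->
  exists B : {set 'I_n.+1}, [/\ A \subset B, (ord0 : 'I_n.+1) \notin B & #|B| = #|A| + d].
Proof.
elim: d A => [|d IH] A A0 Ad.
  by exists A; rewrite addn0 subxx.
have [x Hx] : exists x : 'I_n.+1, x \notin (ord0 |: A).
  apply/existsP; rewrite -negb_forall; apply/negP => /forallP H.
  have : [set: 'I_n.+1] \subset ord0 |: A by apply/subsetP => x _; exact: H.
  move/subset_leq_card; rewrite cardsT card_ord cardsU1 A0.
  move: Ad; set z := #|A|; lia.
have [B [AB B0 cB]] : exists B : {set 'I_n.+1}, [/\ x |: A \subset B, (ord0 : 'I_n.+1) \notin B & #|B| = #|x |: A| + d].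
  apply: IH.
    rewrite !inE negb_or A0 andbT; move: Hx; rewrite !inE negb_or => /andP [H _].
    by rewrite eq_sym.
  rewrite cardsU1; move: Hx; rewrite !inE negb_or => /andP [_ ->].
  move: Ad; set z := #|A|; lia.
exists B; split => //.
  by apply: subset_trans AB; apply: subsetUr.
rewrite cB cardsU1; move: Hx; rewrite !inE negb_or => /andP [_ ->].
set z := #|A|; lia.
Qed.

Lemma sumset_mono n (A B : {set 'I_n.+1}) : A \subset B -> sumset_card A <= sumset_card B.
Proof.
move=> AB; rewrite !sumset_cardE; apply: subset_leq_card; apply/subsetP => s.
rewrite !inE => /existsP [a /andP [Ha /existsP [b /andP [Hb E]]]].
apply/existsP; exists a; rewrite (subsetP AB _ Ha) /=.
by apply/existsP; exists b; rewrite (subsetP AB _ Hb).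
Qed.

Lemma s_kn_ge n k (A : {set 'I_n.+1}) : (ord0 : 'I_n.+1) \notin A -> #|A| <= k -> k <= n ->
  sumset_card A <= s_kn k n.
Proof.
move=> A0 Ak kn.
have [B [AB B0 cB]] := @extend_set n A (k - #|A|) A0 (ltac:(lia)).
apply: leq_trans (sumset_mono AB) _.
rewrite /s_kn; apply: (@leq_bigmax_cond _ (fun B : {set 'I_n.+1} => (ord0 \notin B) && (#|B| == k)) (fun B => sumset_card B) B).
by rewrite B0 cB; apply/eqP; lia.
Qed.

Lemma disc_skn n m o b k :
  0 < m -> 0 < o -> m < n -> o + m * m.+1 + m * b <= n -> 3 * m + 2 + b <= k -> k <= n ->
  2 * (2 * (m * m.+1 + m * b) + m * b) <=
  2 * s_kn k n
  + ((m * b - o) %/ m + 1) * ((m * b - o) %/ m + 1).+1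
  + (m + b - (n - (o + m * m.+1)) %/ m) * (m + b - (n - (o + m * m.+1)) %/ m).+1
  + 2 * ((o + m * m.+1 + m * b).+1 - (n - m + o)).
Proof.
move=> m0 o0 mn Hn Hk kn.
have H := main_disc m0 o0 mn Hn.
have H2 : sumset_card (Aset n m o b) <= s_kn k n.
  apply: s_kn_ge => //; first exact: ord0_notin_A.
  exact: leq_trans (card_Aset n m o b) Hk.
move: H H2; set X := sumset_card _; lia.
Qed.

Local Open Scope R_scope.


Lemma INR_addn (x y : nat) : INR (x + y) = INR x + INR y.
Proof. exact: plus_INR. Qed.
Lemma INR_muln (x y : nat) : INR (x * y) = INR x * INR y.
Proof. exact: mult_INR. Qed.
Lemma INR_succn (x : nat) : INR x.+1 = INR x + 1.
Proof. exact: S_INR. Qed.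
Lemma INR_subn (x y : nat) : INR (x - y) = Rmax 0 (INR x - INR y).
Proof.
case: (leqP y x) => H.
  rewrite Rmax_right; last by (have := le_INR _ _ (leP H)); lra.
  by apply: minus_INR; apply/leP.
have -> : (x - y = 0)%N by apply/eqP; rewrite subn_eq0 ltnW.
rewrite Rmax_left //=; have := lt_INR _ _ (ltP H); lra.
Qed.
Lemma INR_leN (x y : nat) : (x <= y)%N -> (INR x <= INR y).
Proof. by move/leP; apply: le_INR. Qed.
Lemma INR_divn (x m : nat) : (0 < m)%N -> (INR (x %/ m) * INR m <= INR x).
Proof. move=> m0; rewrite -INR_muln; apply: INR_leN; exact: leq_trunc_div. Qed.
Lemma INR_minn (x y : nat) : INR (minn x y) = Rmin (INR x) (INR y).
Proof.
rewrite /minn; case: (ltnP x y) => H.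
  rewrite Rmin_left //; have := lt_INR _ _ (ltP H); lra.
rewrite Rmin_right //; exact: INR_leN.
Qed.

Lemma disc_real n m o b k :
  (0 < m)%N -> (0 < o)%N -> (m < n)%N -> (o + m * m.+1 + m * b <= n)%N -> (3 * m + 2 + b <= k)%N -> (k <= n)%N ->
  2 * (2 * (INR m * (INR m + 1) + INR m * INR b) + INR m * INR b) <=
  2 * INR (s_kn k n)
  + INR ((m * b - o) %/ m + 1) * (INR ((m * b - o) %/ m + 1) + 1)
  + INR (m + b - (n - (o + m * m.+1)) %/ m) * (INR (m + b - (n - (o + m * m.+1)) %/ m) + 1)
  + 2 * INR ((o + m * m.+1 + m * b).+1 - (n - m + o)).
Proof.
move=> m0 o0 mn Hn Hk kn.
have := INR_leN (disc_skn m0 o0 mn Hn Hk kn).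
rewrite !(INR_addn, INR_muln, INR_succn).
set X1 := INR ((m * b - o) %/ m + 1); set X2 := INR (m + b - _); set X3 := INR (_ - _).
rewrite [INR 0]/=; lra.
Qed.

Unset Implicit Arguments.
Set Strict Implicit.
Set Printing Implicit Defensive.


Definition Gf (M B O Q e : R) : R :=
  let y1 := Rmax 0 (M * B - O) / M + e in
  let y2 := Rmax 0 (M + B - Q) in
  let y3 := Rmax 0 (M * (M + e) + M * B + e * e - 1 + M * e) in
  2 * (M * (M + e)) + 3 * (M * B) - y1 * (y1 + e) / 2 - y2 * (y2 + e) / 2 - y3.

Definition Phi (c a w : R) : R :=
  Gf a (Rmin (c - 3 * a) ((1 - w - a * a) / a)) w ((1 - w - a * a) / a) 0.

Lemma lim_opp (u : nat -> R) (l : R) : is_lim_seq u l -> is_lim_seq (fun n => - u n) (- l).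
Proof. intro H. apply (is_lim_seq_opp u l). exact H. Qed.

Ltac lim_step := first [ apply is_lim_seq_plus' | apply is_lim_seq_minus'
  | apply lim_opp | apply is_lim_seq_mult' | apply is_lim_seq_div' | apply lim_max0
  | apply is_lim_seq_const | assumption ].

Lemma lim_Gf (M B O Q e : nat -> R) (a b w q : R) :
  is_lim_seq M a -> is_lim_seq B b -> is_lim_seq O w -> is_lim_seq Q q ->
  is_lim_seq e 0 -> a <> 0 ->
  is_lim_seq (fun n => Gf (M n) (B n) (O n) (Q n) (e n)) (Gf a b w q 0).
Proof.
intros HM HB HO HQ He Ha.
pose proof (is_lim_seq_minus' _ _ _ _ (is_lim_seq_mult' _ _ _ _ HM HB) HO) as L1.
pose proof (is_lim_seq_plus' _ _ _ _ (is_lim_seq_div' _ _ _ _ (lim_max0 _ _ L1) HM Ha) He) as Ly1.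
pose proof (lim_max0 _ _ (is_lim_seq_minus' _ _ _ _ (is_lim_seq_plus' _ _ _ _ HM HB) HQ)) as Ly2.
pose proof (is_lim_seq_mult' _ _ _ _ HM (is_lim_seq_plus' _ _ _ _ HM He)) as LMM.
pose proof (is_lim_seq_mult' _ _ _ _ HM HB) as LMB.
pose proof (lim_max0 _ _ (is_lim_seq_plus' _ _ _ _ (is_lim_seq_minus' _ _ _ _
   (is_lim_seq_plus' _ _ _ _ (is_lim_seq_plus' _ _ _ _ LMM LMB) (is_lim_seq_mult' _ _ _ _ He He))
   (is_lim_seq_const 1)) (is_lim_seq_mult' _ _ _ _ HM He))) as Ly3.
pose proof (is_lim_seq_div' _ _ _ _ (is_lim_seq_mult' _ _ _ _ Ly1 (is_lim_seq_plus' _ _ _ _ Ly1 He)) (is_lim_seq_const 2) ltac:(lra)) as T1.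
pose proof (is_lim_seq_div' _ _ _ _ (is_lim_seq_mult' _ _ _ _ Ly2 (is_lim_seq_plus' _ _ _ _ Ly2 He)) (is_lim_seq_const 2) ltac:(lra)) as T2.
pose proof (is_lim_seq_minus' _ _ _ _ (is_lim_seq_minus' _ _ _ _ (is_lim_seq_minus' _ _ _ _
  (is_lim_seq_plus' _ _ _ _ (is_lim_seq_scal_l _ 2 _ LMM) (is_lim_seq_scal_l _ 3 _ LMB)) T1) T2) Ly3) as F.
exact F.
Qed.

Definition kN (c : R) (n : nat) : nat := Z.to_nat (Int_part (c * sqrt (INR n))).
Definition mN (a : R) (n : nat) : nat := Z.to_nat (Int_part (a * sqrt (INR n))).
Definition oN (w : R) (n : nat) : nat := (Z.to_nat (Int_part (w * INR n)) + 1)%N.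
Definition vN a w n : nat := (oN w n + mN a n * (mN a n).+1)%N.
Definition qN a w n : nat := ((n - vN a w n) %/ mN a n)%N.
Definition bN c a w n : nat := minn (kN c n - (3 * mN a n + 2)) (qN a w n).

Lemma ev_lim_lt (u : nat -> R) (l r : R) : is_lim_seq u l -> l < r -> eventually (fun n => u n < r).
Proof.
intros H Hl. apply is_lim_seq_spec in H.
destruct (H (mkposreal (r - l) ltac:(lra))) as [N HN].
exists N. intros n Hn. specialize (HN n Hn). simpl in HN.
apply Rabs_lt_between in HN. lra.
Qed.

Lemma ev_lim_gt (u : nat -> R) (l r : R) : is_lim_seq u l -> r < l -> eventually (fun n => r < u n).
Proof.
intros H Hl. apply is_lim_seq_spec in H.
destruct (H (mkposreal (l - r) ltac:(lra))) as [N HN].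
exists N. intros n Hn. specialize (HN n Hn). simpl in HN.
apply Rabs_lt_between in HN. lra.
Qed.

Lemma ev_and (P Q : nat -> Prop) : eventually P -> eventually Q -> eventually (fun n => P n /\ Q n).
Proof.
intros [N1 H1] [N2 H2]. exists (N1 + N2)%coq_nat. intros n Hn. split.
apply H1; lia. apply H2; lia.
Qed.

Lemma ev_ge1 : eventually (fun n => (1 <= n)%coq_nat).
Proof. exists 1%nat. auto. Qed.


Lemma Rmax0_scale x p : 0 < p -> Rmax 0 (x * p) = Rmax 0 x * p.
Proof. intro Hp. unfold Rmax. destruct (Rle_dec 0 (x * p)), (Rle_dec 0 x); nra. Qed.

Lemma stepB n m o b k q (s : R) :
  (0 < m)%N -> (0 < o)%N -> (m < n)%N -> (o + m * m.+1 + m * b <= n)%N ->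
  (3 * m + 2 + b <= k)%N -> (k <= n)%N ->
  q = ((n - (o + m * m.+1)) %/ m)%N ->
  0 < s -> INR n = s * s ->
  Gf (INR m / s) (INR b / s) (INR o / INR n) (INR q / s) (/ s) <= INR (s_kn k n) / INR n.
Proof.
move=> m0 o0 mn Hn Hk kn Hq Hs Hss.
have H := disc_real m0 o0 mn Hn Hk kn.
rewrite -Hq in H.
have Hm : 0 < INR m by apply: lt_0_INR; apply/ltP.
set mr := INR m in H Hm *; set br := INR b in H *; set or := INR o in H *; set qr := INR q in H *.
set S := INR (s_kn k n) in H *.
set Y1 := Rmax 0 (mr * br - or) / mr + 1.
have X1le : INR ((m * b - o) %/ m + 1) <= Y1.
  rewrite INR_addn /Y1 [INR 1]/=.
  have := INR_divn (m * b - o) m0; rewrite INR_subn INR_muln -/mr -/br -/or => h.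
  have : INR ((m * b - o) %/ m) <= Rmax 0 (mr * br - or) / mr.
    apply (Rmult_le_reg_r mr) => //; rewrite /Rdiv Rmult_assoc Rinv_l; lra.
  lra.
have X1ge : 0 <= INR ((m * b - o) %/ m + 1) by apply pos_INR.
have X2E : INR (m + b - q) = Rmax 0 (mr + br - qr) by rewrite INR_subn INR_addn.
have X3E : INR ((o + m * m.+1 + m * b).+1 - (n - m + o)) =
    Rmax 0 (mr * (mr + 1) + mr * br + 1 - s * s + mr).
  rewrite INR_subn !INR_addn INR_succn !INR_addn !INR_muln INR_succn INR_subn Hss.
  rewrite -/mr -/br -/or (Rmax_right 0 (s * s - mr)).
    by f_equal; ring.
  have := lt_INR _ _ (ltP mn); rewrite Hss -/mr; lra.
rewrite X2E X3E in H.
set X1 := INR ((m * b - o) %/ m + 1) in H X1le X1ge.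
have E1 : Rmax 0 (mr / s * (br / s) - or / (s * s)) = Rmax 0 (mr * br - or) / (s * s).
  replace (mr / s * (br / s) - or / (s * s)) with ((mr * br - or) * / (s * s)) by (field; lra).
  rewrite Rmax0_scale /Rdiv //; apply Rinv_0_lt_compat; nra.
have E2 : Rmax 0 (mr / s + br / s - qr / s) = Rmax 0 (mr + br - qr) / s.
  replace (mr / s + br / s - qr / s) with ((mr + br - qr) * / s) by (field; lra).
  rewrite Rmax0_scale /Rdiv //; apply Rinv_0_lt_compat; nra.
have E3 : Rmax 0 (mr / s * (mr / s + / s) + mr / s * (br / s) + / s * / s - 1 + mr / s * / s)
   = Rmax 0 (mr * (mr + 1) + mr * br + 1 - s * s + mr) / (s * s).
  replace (mr / s * (mr / s + / s) + mr / s * (br / s) + / s * / s - 1 + mr / s * / s)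
    with ((mr * (mr + 1) + mr * br + 1 - s * s + mr) * / (s * s)) by (field; lra).
  rewrite Rmax0_scale /Rdiv //; apply Rinv_0_lt_compat; nra.
set X2 := Rmax 0 (mr + br - qr) in H E2.
set X3 := Rmax 0 (mr * (mr + 1) + mr * br + 1 - s * s + mr) in H E3.
have EG : Gf (mr / s) (br / s) (or / INR n) (qr / s) (/ s) =
   (2 * (mr * (mr + 1)) + 3 * (mr * br) - Y1 * (Y1 + 1) / 2 - X2 * (X2 + 1) / 2 - X3) / (s * s).
  rewrite /Gf Hss E1 E2 E3 /Y1; field; lra.
rewrite EG Hss.
apply Rmult_le_compat_r.
  apply Rlt_le, Rinv_0_lt_compat; nra.
have : X1 * (X1 + 1) <= Y1 * (Y1 + 1) by nra.
lra.
Qed.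


Lemma Rmin_div x y s : 0 < s -> Rmin x y / s = Rmin (x / s) (y / s).
Proof.
intro Hs. unfold Rmin. destruct (Rle_dec x y), (Rle_dec (x / s) (y / s)); try reflexivity.
- exfalso. apply n. apply Rmult_le_compat_r; auto. apply Rlt_le, Rinv_0_lt_compat; auto.
- exfalso. apply n. apply (Rmult_le_reg_r (/ s)). apply Rinv_0_lt_compat; auto. exact r.
Qed.

Lemma main_lower (c a w : R) : 0 < a -> 0 <= w -> 3 * a < c -> w + a * a < 1 ->
  Rbar_le (Phi c a w) (s_c c).
Proof.
intros Ha Hw Hc Hwa.
set (ee := fun n => / sqrt (INR n)).
set (MM := fun n => INR (mN a n) / sqrt (INR n)).
set (KK := fun n => INR (kN c n) / sqrt (INR n)).
set (OO := fun n => INR (oN w n) / INR n).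
set (QQ := fun n => INR (qN a w n) / sqrt (INR n)).
set (BB := fun n => INR (bN c a w n) / sqrt (INR n)).
assert (HM : is_lim_seq MM a) by (apply lim_fl_sqrt; lra).
assert (HK : is_lim_seq KK c) by (apply lim_fl_sqrt; lra).
assert (HO : is_lim_seq OO w) by (apply lim_fl_lin; lra).
assert (He : is_lim_seq ee 0) by apply lim_isqrt.
assert (EV1 : eventually (fun n => a / 2 < MM n)) by (apply (ev_lim_gt _ a); auto; lra).
assert (EV2 : eventually (fun n => Rmax a c < sqrt (INR n))).
{ pose proof lim_sqrt_inf as H. apply is_lim_seq_spec in H. apply (H (Rmax a c)). }
assert (EV3 : eventually (fun n => OO n + MM n * (MM n + ee n) < 1)).
{ apply (ev_lim_lt _ (w + a * (a + 0))); [| lra].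
  apply is_lim_seq_plus'; auto. apply is_lim_seq_mult'; auto. apply is_lim_seq_plus'; auto. }
assert (EV4 : eventually (fun n => 0 < KK n - 3 * MM n - 2 * ee n)).
{ apply (ev_lim_gt _ (c - 3 * a - 2 * 0)); [| lra].
  apply is_lim_seq_minus'. apply is_lim_seq_minus'; auto.
  apply (is_lim_seq_scal_l _ 3 a HM). apply (is_lim_seq_scal_l _ 2 0 He). }
pose proof (ev_and _ _ EV1 (ev_and _ _ EV2 (ev_and _ _ EV3 (ev_and _ _ EV4 ev_ge1)))) as EV.
clear EV1 EV2 EV3 EV4.
assert (FACTS : eventually (fun n =>
   let s := sqrt (INR n) in
   0 < s /\ INR n = s * s /\ (0 < mN a n)%N /\ (mN a n < n)%N /\ (kN c n <= n)%N /\
   (vN a w n <= n)%N /\ (3 * mN a n + 2 <= kN c n)%N)).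
{ destruct EV as [N HN]. exists N. intros n Hn.
  destruct (HN n Hn) as [H1 [H2 [H3 [H4 H5]]]]. clear HN.
  cbv zeta. set (s := sqrt (INR n)).
  assert (Hn0 : 0 < INR n) by (apply lt_0_INR; lia).
  assert (Hs : 0 < s) by (apply sqrt_lt_R0; lra).
  assert (Hss : INR n = s * s) by (unfold s; rewrite sqrt_sqrt; lra).
  unfold MM, KK, OO, ee in *. fold s in H1, H3, H4, H2.
  assert (Hmf : a * s - 1 < INR (mN a n) <= a * s) by (apply INR_floor; nra).
  assert (Hkf : c * s - 1 < INR (kN c n) <= c * s) by (apply INR_floor; nra).
  assert (Ham := Rmax_l a c). assert (Hcm := Rmax_r a c).
  split; [exact Hs|]. split; [exact Hss|].
  split.
  { apply/ltP. apply INR_lt. simpl. apply (Rmult_lt_reg_r (/ s)).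
    apply Rinv_0_lt_compat; auto. rewrite Rmult_0_l. fold (Rdiv (INR (mN a n)) s). lra. }
  split.
  { apply/ltP. apply INR_lt. rewrite Hss.
    assert (a * s < s * s) by (apply Rmult_lt_compat_r; lra). lra. }
  split.
  { apply/leP. apply INR_le. rewrite Hss.
    assert (c * s <= s * s) by (apply Rmult_le_compat_r; lra). lra. }
  split.
  { apply/leP. apply INR_le. unfold vN.
    rewrite INR_addn INR_muln INR_succn.
    assert (E : INR (oN w n) / INR n + INR (mN a n) / s * (INR (mN a n) / s + / s) =
                (INR (oN w n) + INR (mN a n) * (INR (mN a n) + 1)) / INR n).
    { rewrite Hss. field. lra. }
    rewrite E in H3.
    apply (Rmult_lt_compat_r (INR n)) in H3; auto.
    unfold Rdiv in H3. rewrite Rmult_assoc Rinv_l in H3; lra. }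
  { apply/leP. apply INR_le. rewrite INR_addn INR_muln. simpl INR.
    assert (E : INR (kN c n) / s - 3 * (INR (mN a n) / s) - 2 * / s =
                (INR (kN c n) - 3 * INR (mN a n) - 2) / s) by (field; lra).
    rewrite E in H4.
    apply (Rmult_lt_compat_r s) in H4; auto.
    unfold Rdiv in H4. rewrite Rmult_0_l Rmult_assoc Rinv_l in H4; lra. } }
clear EV.
set (qb := (1 - w - a * a) / a).
assert (HQ : is_lim_seq QQ qb).
{ set (z := fun n => (1 - (OO n + MM n * (MM n + ee n))) / MM n).
  assert (Hz : is_lim_seq z qb).
  { unfold qb. replace (1 - w - a * a) with (1 - (w + a * (a + 0))) by ring.
    apply is_lim_seq_div'; auto; [|lra].
    apply is_lim_seq_minus'. apply is_lim_seq_const.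
    apply is_lim_seq_plus'; auto. apply is_lim_seq_mult'; auto. apply is_lim_seq_plus'; auto. }
  apply is_lim_seq_le_le_loc with (fun n => z n - ee n) z; [| |exact Hz].
  2: { replace (Rbar.Finite qb) with (Rbar.Finite (qb - 0)) by (f_equal; ring). apply is_lim_seq_minus'; auto. }
  destruct FACTS as [N HN]. exists N. intros n Hn.
  destruct (HN n Hn) as [Hs [Hss [m0 [mn [kn [vn Hk]]]]]]. clear HN.
  set (s := sqrt (INR n)) in *.
  unfold z, QQ, OO, MM, ee. fold s.
  assert (Hm : 0 < INR (mN a n)) by (apply lt_0_INR; apply/ltP; exact m0).
  assert (E : (1 - (INR (oN w n) / INR n + INR (mN a n) / s * (INR (mN a n) / s + / s))) /
      (INR (mN a n) / s) = (INR n - INR (vN a w n)) / INR (mN a n) / s).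
  { unfold vN. rewrite INR_addn INR_muln INR_succn Hss. field. lra. }
  rewrite E.
  assert (Hq1 := INR_divn (n - vN a w n) m0).
  assert (Hq2 : INR (n - vN a w n) < (INR ((n - vN a w n) %/ mN a n) + 1) * INR (mN a n)).
  { rewrite -INR_succn -INR_muln. apply lt_INR. apply/ltP. apply ltn_ceil. exact m0. }
  assert (Ev : INR (n - vN a w n) = INR n - INR (vN a w n)).
  { rewrite INR_subn Rmax_right; auto. assert (INR (vN a w n) <= INR n) by (apply le_INR; apply/leP; exact vn). lra. }
  rewrite Ev in Hq1 Hq2.
  fold (qN a w n) in Hq1, Hq2.
  set (q := INR (qN a w n)) in *. set (mr := INR (mN a n)) in *.
  split.
  - apply (Rmult_le_reg_r s); auto. unfold Rdiv. rewrite Rmult_minus_distr_r !Rmult_assoc Rinv_l; [|lra].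
    rewrite !Rmult_1_r. apply (Rmult_le_reg_r mr); auto.
    rewrite Rmult_minus_distr_r Rmult_assoc Rinv_l; lra.
  - apply (Rmult_le_reg_r s); auto. unfold Rdiv. rewrite !Rmult_assoc Rinv_l; [|lra].
    rewrite !Rmult_1_r. apply (Rmult_le_reg_r mr); auto.
    rewrite Rmult_assoc Rinv_l; lra. }
set (Bb := Rmin (c - 3 * a) qb).
assert (HB : is_lim_seq BB Bb).
{ apply is_lim_seq_ext_loc with (fun n => Rmin (KK n - 3 * MM n - 2 * ee n) (QQ n)).
  - destruct FACTS as [N HN]. exists N. intros n Hn.
    destruct (HN n Hn) as [Hs [Hss [m0 [mn [kn [vn Hk]]]]]]. clear HN.
    set (s := sqrt (INR n)) in *.
    unfold BB, KK, MM, QQ, ee. fold s. unfold bN.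
    rewrite INR_minn Rmin_div; auto. f_equal.
    rewrite INR_subn Rmax_right.
    + rewrite INR_addn INR_muln. simpl INR. field. lra.
    + assert (INR (3 * mN a n + 2) <= INR (kN c n)) by (apply le_INR; apply/leP; exact Hk). lra.
  - apply lim_min; auto.
    replace (c - 3 * a) with (c - 3 * a - 2 * 0) by ring.
    apply is_lim_seq_minus'. apply is_lim_seq_minus'; auto.
    apply (is_lim_seq_scal_l _ 3 a HM). apply (is_lim_seq_scal_l _ 2 0 He). }
assert (HG := lim_Gf _ _ _ _ _ a Bb w qb HM HB HO HQ He ltac:(lra)).
assert (EVB : eventually (fun n => Gf (MM n) (BB n) (OO n) (QQ n) (ee n) <=
   INR (s_kn (Z.to_nat (Int_part (c * sqrt (INR n)))) n) / INR n)).
{ destruct FACTS as [N HN]. exists N. intros n Hn.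
  destruct (HN n Hn) as [Hs [Hss [m0 [mn [kn [vn Hk]]]]]]. clear HN.
  set (s := sqrt (INR n)) in *.
  unfold BB, KK, MM, QQ, ee, OO. fold s.
  apply (@stepB n (mN a n) (oN w n) (bN c a w n) (kN c n) (qN a w n) s); auto.
  - by rewrite /oN addn1.
  - have hb : (bN c a w n <= qN a w n)%N by apply geq_minr.
    have hq : (mN a n * qN a w n <= n - vN a w n)%N.
      by rewrite mulnC /qN; apply leq_divM.
    have hmb : (mN a n * bN c a w n <= mN a n * qN a w n)%N by rewrite leq_mul2l hb orbT.
    move: vn hq hmb; rewrite /vN; lia.
  - have hb : (bN c a w n <= kN c n - (3 * mN a n + 2))%N by apply geq_minl.
    move: Hk hb; lia. }
pose proof (LimInf_le _ _ EVB) as HL.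
rewrite (is_LimInf_seq_unique _ _ (is_lim_LimInf_seq _ _ HG)) in HL.
exact HL.
Qed.

End Disc.
Import Disc.

Module Fin.
Local Open Scope R_scope.


Lemma s2_facts : sqrt 2 * sqrt 2 = 2 /\ 1.41421 < sqrt 2 < 1.41422.
Proof.
assert (H : sqrt 2 * sqrt 2 = 2) by (apply sqrt_sqrt; lra).
assert (H0 : 0 <= sqrt 2) by apply sqrt_pos.
split; auto. split; nra.
Qed.

Lemma s3_facts : sqrt 3 * sqrt 3 = 3 /\ 1.73205 < sqrt 3 < 1.73206.
Proof.
assert (H : sqrt 3 * sqrt 3 = 3) by (apply sqrt_sqrt; lra).
assert (H0 : 0 <= sqrt 3) by apply sqrt_pos.
split; auto. split; nra.
Qed.

Lemma small_phi c : 0 < c -> c <= c_0 ->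
  let a := 3 * c / 14 in let w := a * (c - 3 * a) in
  0 < a /\ 0 <= w /\ 3 * a < c /\ w + a * a < 1 /\ 9 * c ^ 2 / 28 <= Phi c a w.
Proof.
intros Hc Hc0 a w.
destruct s3_facts as [E3 [B3a B3b]].
assert (Hcc : c * c <= 49 / 12).
{ unfold c_0 in Hc0.
  assert (c * (2 * sqrt 3) <= 7).
  { apply (Rmult_le_compat_r (2 * sqrt 3)) in Hc0; [|lra].
    unfold Rdiv in Hc0. rewrite Rmult_assoc, Rinv_l in Hc0; lra. }
  nra. }
assert (Ha : 0 < a) by (unfold a; lra).
assert (Hw : w = 15 * (c * c) / 196) by (unfold w, a; field).
repeat split; try (unfold a; lra); try (rewrite Hw; nra).
unfold Phi, Gf. cbv zeta.
set (qb := (1 - w - a * a) / a).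
assert (Hq : c - 3 * a <= qb).
{ unfold qb. apply (Rmult_le_reg_r a); auto. unfold Rdiv. rewrite Rmult_assoc, Rinv_l; [|lra].
  rewrite Hw; unfold a; nra. }
rewrite Rmin_left; auto.
replace (a * (c - 3 * a) - w) with 0 by (unfold w; ring).
rewrite (Rmax_left 0 0); [|lra].
rewrite (Rmax_left 0 (a + (c - 3 * a) - qb)).
2: { unfold qb. cut (a * (a + (c - 3 * a)) <= 1 - w - a * a).
     - intro H. assert (a + (c - 3 * a) <= (1 - w - a * a) / a); [|lra].
       apply (Rmult_le_reg_r a); auto. unfold Rdiv. rewrite Rmult_assoc, Rinv_l; lra.
     - rewrite Hw; unfold a; nra. }
rewrite (Rmax_left 0 (a * (a + 0) + a * (c - 3 * a) + 0 * 0 - 1 + a * 0)).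
2: { unfold a; nra. }
apply Req_le. unfold a. field. lra.
Qed.

Lemma mid_phi c : c_0 <= c <= c_1 ->
  let a := alpha c in let w := 1 / 2 - a * a in
  0 < a /\ 0 <= w /\ 3 * a < c /\ w + a * a < 1 /\ bound_mid c <= Phi c a w.
Proof.
intros [Hc0 Hc1]. cbv zeta.
destruct s2_facts as [E2 [B2a B2b]]. destruct s3_facts as [E3 [B3a B3b]].
assert (Ec0 : c_0 = 7 * sqrt 3 / 6).
{ unfold c_0. field_simplify_eq; nra. }
assert (Ei2 : 1 / sqrt 2 = sqrt 2 / 2).
{ field_simplify_eq; nra. }
assert (Ec1 : c_1 = 2 * sqrt 2) by reflexivity.
assert (Eal : alpha c = sqrt 3 / 4 + (c - c_0) * (sqrt 2 / 2 - sqrt 3 / 4) / (c_1 - c_0)).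
{ unfold alpha. rewrite Ei2. reflexivity. }
assert (Ebm : bound_mid c = let a := alpha c in
   - c ^ 2 + 7 * a * c + c / a - 11 * a ^ 2 - 2 - 1 / (4 * a ^ 2)) by reflexivity.
cbv zeta in Ebm. rewrite Ebm. clear Ebm.
remember (alpha c) as a eqn:Ea.
rewrite Ec0, Ec1 in Eal. rewrite Ec0 in Hc0. rewrite Ec1 in Hc1.
clear Ec0 Ec1 Ei2.
remember (sqrt 2) as s2 eqn:Es2. remember (sqrt 3) as s3 eqn:Es3.
clear Es2 Es3.
set (dc := 2 * s2 - 7 * s3 / 6).
assert (Hdc : 0.8 < dc) by (unfold dc; lra).
set (t := (c - 7 * s3 / 6) / dc).
assert (Hcdef : c = 7 * s3 / 6 + t * dc) by (unfold t; field; lra).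
assert (Ht0 : 0 <= t).
{ unfold t. apply Rmult_le_pos; [lra | apply Rlt_le, Rinv_0_lt_compat; lra]. }
assert (Ht1 : t <= 1).
{ unfold t. apply (Rmult_le_reg_r dc); [lra|]. unfold Rdiv. rewrite Rmult_assoc, Rinv_l; [|lra].
  unfold dc. lra. }
assert (Hadef : a = s3 / 4 + t * (s2 / 2 - s3 / 4)).
{ rewrite Eal. fold dc. unfold t. field. lra. }
assert (Hdcdef : dc = 2 * s2 - 7 * s3 / 6) by reflexivity.
clearbody t dc. clear Ea Eal.
assert (Ha : 0 < a) by (rewrite Hadef; nra).
assert (HaA : a <= s2 / 2) by (rewrite Hadef; nra).
assert (Ha2 : a * a <= 1 / 2) by nra.
assert (F3e : c - 3 * a = (1 - t) * (5 * s3 / 12) + t * (s2 / 2)).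
{ rewrite Hcdef, Hadef, Hdcdef. field. }
assert (F3 : 0.7 <= c - 3 * a) by (rewrite F3e; nra).
assert (HBk : 0 <= s2 / 2 * (dc - 3 * (s2 / 2 - s3 / 4)) + (s2 / 2 - s3 / 4) * (c - 3 * a)).
{ assert (0.27 <= s2 / 2 - s3 / 4) by lra.
  assert (dc - 3 * (s2 / 2 - s3 / 4) >= -0.02).
  { lra. }
  nra. }
assert (EL : 1 / 2 - a * (c - 3 * a) = (1 - t) * (s2 / 2 * (dc - 3 * (s2 / 2 - s3 / 4)) + (s2 / 2 - s3 / 4) * (c - 3 * a))
   + (1 / 2 - (s2 / 2) * (2 * s2) + 3 * ((s2 / 2) * (s2 / 2)))).
{ rewrite Hcdef, Hadef, Hdcdef. field. }
assert (HL : a * (c - 3 * a) <= 1 / 2).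
{ assert (0 <= (1 - t) * (s2 / 2 * (dc - 3 * (s2 / 2 - s3 / 4)) + (s2 / 2 - s3 / 4) * (c - 3 * a)))
    by (apply Rmult_le_pos; lra). nra. }
clear EL HBk F3e Hcdef Hadef Hdcdef.
set (L := a * (c - 3 * a)) in *.
assert (HL0 : 0 <= L) by (unfold L; nra).
repeat split; try lra.
unfold Phi, Gf. cbv zeta.
replace (1 - (1 / 2 - a * a) - a * a) with (1 / 2) by field.
assert (Hq : c - 3 * a <= 1 / 2 / a).
{ apply (Rmult_le_reg_r a); auto. unfold Rdiv. rewrite Rmult_assoc, Rinv_l; [|lra].
  unfold L in HL. nra. }
rewrite Rmin_left; auto.
rewrite (Rmax_left 0 (a * (a + 0) + a * (c - 3 * a) + 0 * 0 - 1 + a * 0)).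
2: { fold L. nra. }
replace (a * (c - 3 * a) - (1 / 2 - a * a)) with (L + a * a - 1 / 2) by (unfold L; field).
replace (a + (c - 3 * a) - 1 / 2 / a) with ((L + a * a - 1 / 2) / a) by (unfold L; field; lra).
assert (Ebm : - c ^ 2 + 7 * a * c + c / a - 11 * a ^ 2 - 2 - 1 / (4 * a ^ 2)
   = 2 * (a * a) + 3 * L - ((L + a * a - 1 / 2) / a) * ((L + a * a - 1 / 2) / a)).
{ unfold L. field. lra. }
rewrite Ebm. fold L.
set (d := L + a * a - 1 / 2).
assert (Hia : 0 < / a) by (apply Rinv_0_lt_compat; lra).
destruct (Rle_dec d 0) as [Hd | Hd].
- rewrite (Rmax_left 0 d); [|lra].
  rewrite (Rmax_left 0 (d / a)).
  2: { unfold Rdiv. nra. }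
  assert (0 <= (d / a) * (d / a)) by nra.
  replace (0 / a) with 0 by (field; lra). lra.
- rewrite (Rmax_right 0 d); [|lra].
  rewrite (Rmax_right 0 (d / a)).
  2: { unfold Rdiv. nra. }
  lra.
Qed.

End Fin.
Import Fin.

Open Scope R_scope.

Theorem lemma5 (c : R) (hc : 0 < c) :
  (c <= c_0 -> Rbar_le (Finite (9 * c ^ 2 / 28)) (s_c c)) /\
  (c_0 <= c <= c_1 -> Rbar_le (Finite (bound_mid c)) (s_c c)).
Proof.
split.
- intro H. pose proof (small_phi c hc H) as HH. cbv zeta in HH.
  destruct HH as [Ha [Hw [H3 [Hwa Hphi]]]].
  eapply Rbar_le_trans; [| apply (main_lower c _ _ Ha Hw H3 Hwa)]. simpl. exact Hphi.
- intro H. pose proof (mid_phi c H) as HH. cbv zeta in HH.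
  destruct HH as [Ha [Hw [H3 [Hwa Hphi]]]].
  eapply Rbar_le_trans; [| apply (main_lower c _ _ Ha Hw H3 Hwa)]. simpl. exact Hphi.
Qed.
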